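(* Let $(X,d^\star)$ be a $\star$-metric space and $M\subseteq X$ a nonempty subset. Then $(M,d^\star|_{M\times M})$ is totally bounded if and only if $(\overline{M},d^\star|_{\overline{M}\times\overline{M}})$ is totally bounded, where $\overline{M}$ is the closure of $M$ in $(X,\mathscr{T}_{d^\star})$.
   Context: A $t$-definer is a function $\star:[0,\infty)\times[0,\infty)\to[0,\infty)$ such that for all $a,b,c\ge 0$: $a\star b=b\star a$; $a\star(b\star c)=(a\star b)\star c$; if $a\le b$ then $a\star c\le b\star c$; $a\star 0=a$; and $\star$ is continuous in its first variable with respect to the Euclidean topology. Given a nonempty set $X$ and a $t$-definer $\star$, a $\star$-metric on $X$ is a function $d^\star:X\times X\to[0,\infty)$ such that for all $x,y,z\in X$: $d^\star(x,y)=0$ iff $x=y$; $d^\star(x,y)=d^\star(y,x)$; and $d^\star(x,y)\le d^\star(x,z)\star d^\star(z,y)$; $(X,d^\star)$ is a $\star$-metric space. Put $B_{d^\star}(a,r)=\{x\in X: d^\star(a,x)<r\}$ and let $\mathscr{T}_{d^\star}$ be the topology consisting of all $U\subseteq X$ such that for each $a\in U$ some $B_{d^\star}(a,r)$, $r>0$, is contained in $U$. A $\star$-metric space $(Y,\rho)$ is totally bounded if for every $\epsilon>0$ there is a finite set $F\subseteq Y$ with $Y=\bigcup_{x\in F}\{y\in Y:\rho(x,y)<\epsilon\}$. *)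

(* Defs.v *)
From Stdlib Require Import Reals List.
Open Scope R_scope.

(* A t-definer: an operation on [0,oo). We model it as star : R -> R -> R,
   required to map [0,oo)x[0,oo) into [0,oo) and satisfy the axioms on [0,oo). *)
Definition t_definer (star : R -> R -> R) : Prop :=
  (forall a b, 0 <= a -> 0 <= b -> 0 <= star a b) /\
  (forall a b, 0 <= a -> 0 <= b -> star a b = star b a) /\
  (forall a b c, 0 <= a -> 0 <= b -> 0 <= c ->
     star a (star b c) = star (star a b) c) /\
  (forall a b c, 0 <= a -> 0 <= b -> 0 <= c -> a <= b -> star a c <= star b c) /\
  (forall a, 0 <= a -> star a 0 = a) /\
  (forall b a, 0 <= b -> 0 <= a ->
     forall eps, eps > 0 -> exists delta, delta > 0 /\
       forall x, 0 <= x -> Rabs (x - a) < delta -> Rabs (star x b - star a b) < eps).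

Definition star_metric {X : Type} (star : R -> R -> R) (d : X -> X -> R) : Prop :=
  (forall x y, 0 <= d x y) /\
  (forall x y, d x y = 0 <-> x = y) /\
  (forall x y, d x y = d y x) /\
  (forall x y z, d x y <= star (d x z) (d z y)).

Definition ball {X : Type} (d : X -> X -> R) (a : X) (r : R) : X -> Prop :=
  fun x => d a x < r.

Definition is_open {X : Type} (d : X -> X -> R) (U : X -> Prop) : Prop :=
  forall a, U a -> exists r, r > 0 /\ forall x, ball d a r x -> U x.

Definition closure {X : Type} (d : X -> X -> R) (M : X -> Prop) : X -> Prop :=
  fun x => forall U, is_open d U -> U x -> exists y, U y /\ M y.

Definition totally_bounded_sub {X : Type} (d : X -> X -> R) (M : X -> Prop) : Prop :=
  forall eps, eps > 0 -> exists F : list X,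
    (forall x, In x F -> M x) /\
    (forall y, M y -> exists x, In x F /\ d x y < eps).

(* Main.v *)
Require Import Defs.
From Stdlib Require Import Reals List Lra Classical.
Open Scope R_scope.

Lemma star_small (star : R -> R -> R) (Hstar : t_definer star) :
  forall eps, eps > 0 -> exists delta, delta > 0 /\
    forall a b, 0 <= a -> a < delta -> 0 <= b -> b < delta -> star a b < eps.
Proof.
  destruct Hstar as [H0 [Hc [Ha [Hm [Hz Hcont]]]]].
  intros eps He.
  destruct (Hcont (eps/2) 0 ltac:(lra) ltac:(lra) (eps/2) ltac:(lra)) as [d1 [Hd1 Hd1']].
  exists (Rmin d1 (eps/2)). split. { apply Rmin_pos; lra. }
  intros a b Ha0 Ha1 Hb0 Hb1.
  pose proof (Rmin_l d1 (eps/2)). pose proof (Rmin_r d1 (eps/2)).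
  assert (E: star 0 (eps/2) = eps/2).
  { rewrite Hc by lra. apply Hz; lra. }
  assert (K := Hd1' a Ha0 ltac:(rewrite Rminus_0_r, Rabs_pos_eq; lra)).
  rewrite E in K. apply Rabs_def2 in K.
  rewrite Hc by lra.
  assert (star b a <= star (eps/2) a) by (apply Hm; lra).
  rewrite (Hc (eps/2) a) in H2 by lra. lra.
Qed.

Lemma ball_open {X : Type} (star : R -> R -> R) (d : X -> X -> R)
  (Hstar : t_definer star) (Hd : star_metric star d) :
  forall y r, is_open d (ball d y r).
Proof.
  destruct Hstar as [H0 [Hc [Ha [Hm [Hz Hcont]]]]].
  destruct Hd as [Hd0 [Hdeq [Hds Htri]]].
  intros y r z Hz'. unfold ball in *.
  set (s := d y z) in *.
  assert (Hs : 0 <= s) by apply Hd0.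
  destruct (Hcont s 0 Hs ltac:(lra) (r - s) ltac:(lra)) as [rho [Hr Hr']].
  exists rho. split; [exact Hr|]. intros w Hw.
  pose proof (Hd0 z w) as Hzw.
  assert (K := Hr' (d z w) Hzw ltac:(rewrite Rminus_0_r, Rabs_pos_eq; lra)).
  rewrite (Hc 0 s), Hz in K by lra. apply Rabs_def2 in K.
  pose proof (Htri y w z). fold s in H.
  rewrite Hc in H by lra. lra.
Qed.

Theorem theorem3p5 (X : Type) (star : R -> R -> R) (d : X -> X -> R)
  (Hstar : t_definer star) (Hd : star_metric star d)
  (M : X -> Prop) (HM : exists m, M m) :
  totally_bounded_sub d M <-> totally_bounded_sub d (closure d M).
Proof.
  pose proof Hd as [Hd0 [Hdeq [Hds Htri]]].
  assert (Hsub : forall y, M y -> closure d M y).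
  { intros y Hy U _ HU. exists y. auto. }
  split.
  - intros TB eps He.
    destruct (star_small star Hstar eps He) as [del [Hdel Hdel']].
    destruct (TB del Hdel) as [F [HF1 HF2]].
    exists F. split. { intros x Hx. apply Hsub, HF1, Hx. }
    intros y Hy.
    destruct (Hy (ball d y del) (ball_open star d Hstar Hd y del))
      as [m [Hm1 Hm2]].
    { unfold ball. replace (d y y) with 0 by (symmetry; apply Hdeq; reflexivity). lra. }
    destruct (HF2 m Hm2) as [x [Hx1 Hx2]].
    exists x. split; auto.
    unfold ball in Hm1. rewrite Hds in Hm1.
    pose proof (Htri x y m).
    pose proof (Hdel' (d x m) (d m y) (Hd0 _ _) Hx2 (Hd0 _ _) Hm1). lra.
  - intros TB eps He.
    destruct (star_small star Hstar eps He) as [del [Hdel Hdel']].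
    destruct (TB del Hdel) as [F [HF1 HF2]].
    assert (G : forall L : list X, exists G : list X, (forall g, In g G -> M g) /\
      forall c, In c L -> (exists m, M m /\ d c m < del) ->
        exists g, In g G /\ d c g < del).
    { induction L as [|c L IH].
      - exists nil. split; [intros g []|]. intros c [].
      - destruct IH as [G [HG1 HG2]].
        destruct (classic (exists m, M m /\ d c m < del)) as [[m [Hm1 Hm2]]|Hn].
        + exists (m :: G). split.
          * intros g [<-|Hg]; auto.
          * intros c' [<-|Hc'] Hex.
            -- exists m. split; [left; auto| auto].
            -- destruct (HG2 c' Hc' Hex) as [g [Hg1 Hg2]]. exists g. split; [right|]; auto.
        + exists G. split; auto.
          intros c' [<-|Hc'] Hex.
          * contradiction.
          * apply HG2; auto. }
    destruct (G F) as [G' [HG1 HG2]].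
    exists G'. split; auto.
    intros y Hy.
    destruct (HF2 y (Hsub y Hy)) as [c [Hc1 Hc2]].
    destruct (HG2 c Hc1 (ex_intro _ y (conj Hy Hc2))) as [g [Hg1 Hg2]].
    exists g. split; auto.
    pose proof (Htri g y c).
    rewrite Hds in Hg2.
    pose proof (Hdel' (d g c) (d c y) (Hd0 _ _) Hg2 (Hd0 _ _) Hc2). lra.
Qed.
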